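(* (Subject reduction for NLPCF.) If $\Gamma;\Delta\vdash e:\tau$ and $e\rightsquigarrow e'$, then $\Gamma;\Delta\vdash e':\tau$.
   Context: NLPCF is LPCF extended with non-determinism. Types: $\tau ::= \mathsf{Nat}\mid\mathsf{Bool}\mid \tau\,\&\,\tau' \mid \tau\otimes\tau' \mid \tau\multimap\tau' \mid \tau\to\tau'\mid\mathsf{T}\tau$. Terms: $e ::= x \mid \mathtt{0},\mathtt{1},\dots \mid \mathtt{succ}\mid\mathtt{pred}\mid\mathtt{iszero} \mid \lambda x.e \mid e\,e' \mid \mathtt{true}\mid\mathtt{false} \mid \mathtt{if}\ e_1\ \mathtt{then}\ e_2\ \mathtt{else}\ e_3 \mid \langle e_1,e_2\rangle \mid \mathtt{proj}_i(e) \mid \mathtt{fix}_\tau \mid e_1\otimes e_2 \mid \mathtt{let}\ x\otimes y = e\ \mathtt{in}\ e' \mid \mathtt{val}(e)\mid \mathtt{bind}\ x\Leftarrow e\ \mathtt{in}\ e'\mid e\sqcap e'$, up to $\alpha$-equivalence, with capture-avoiding substitution. Typing judgements $\Gamma;\Delta\vdash e:\tau$ ($\Gamma$ non-linear, $\Delta$ linear environments, disjoint domains; $\Delta,\Delta'$ disjoint union): $\Gamma;\emptyset\vdash x:\tau$ if $x:\tau\in\Gamma$; $\Gamma;x:\tau\vdash x:\tau$ if $x\notin\Gamma$; $\Gamma;\emptyset\vdash\mathtt{fix}_\tau:(\tau\to\tau)\to\tau$; numerals $:\mathsf{Nat}$, $\mathtt{true},\mathtt{false}:\mathsf{Bool}$,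 $\mathtt{succ},\mathtt{pred}:\mathsf{Nat}\multimap\mathsf{Nat}$, $\mathtt{iszero}:\mathsf{Nat}\multimap\mathsf{Bool}$ (all with empty $\Delta$); from $\Gamma;\Delta\vdash e_1:\mathsf{Bool}$, $\Gamma;\Delta'\vdash e_2:\tau$, $\Gamma;\Delta'\vdash e_3:\tau$ infer $\Gamma;\Delta,\Delta'\vdash\mathtt{if}\ e_1\ \mathtt{then}\ e_2\ \mathtt{else}\ e_3:\tau$; from $\Gamma;\Delta\vdash e_i:\tau_i$ infer $\Gamma;\Delta\vdash\langle e_1,e_2\rangle:\tau_1\&\tau_2$; from $\Gamma;\Delta\vdash e:\tau_1\&\tau_2$ infer $\Gamma;\Delta\vdash\mathtt{proj}_i(e):\tau_i$; from $\Gamma;\Delta_i\vdash e_i:\tau_i$ infer $\Gamma;\Delta_1,\Delta_2\vdash e_1\otimes e_2:\tau_1\otimes\tau_2$; from $\Gamma;\Delta,x:\tau_1,y:\tau_2\vdash e:\tau$ and $\Gamma;\Delta'\vdash e':\tau_1\otimes\tau_2$ infer $\Gamma;\Delta,\Delta'\vdash\mathtt{let}\ x\otimes y=e'\ \mathtt{in}\ e:\tau$; from $\Gamma,x:\tau;\Delta\vdash e:\tau'$ infer $\Gamma;\Delta\vdash\lambda x.e:\tau\to\tau'$; from $\Gamma;\Delta\vdash e:\tau'\to\tau$, $\Gamma;\emptyset\vdash e':\tau'$ infer $\Gamma;\Delta\vdash e\,e':\tau$; from $\Gamma;\Delta,x:\tau\vdash e:\tau'$ infer $\Gamma;\Delta\vdash\lambda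 x.e:\tau\multimap\tau'$; from $\Gamma;\Delta\vdash e:\tau'\multimap\tau$, $\Gamma;\Delta'\vdash e':\tau'$ infer $\Gamma;\Delta,\Delta'\vdash e\,e':\tau$; from $\Gamma;\Delta\vdash e:\tau$ infer $\Gamma;\Delta\vdash\mathtt{val}(e):\mathsf{T}\tau$; from $\Gamma;\emptyset\vdash e_1:\mathsf{T}\tau_1$ and $\Gamma,x:\tau_1;\Delta\vdash e_2:\mathsf{T}\tau_2$ infer $\Gamma;\Delta\vdash\mathtt{bind}\ x\Leftarrow e_1\ \mathtt{in}\ e_2:\mathsf{T}\tau_2$; from $\Gamma;\Delta\vdash e_1:\mathsf{T}\tau_1$ and $\Gamma;\Delta',x:\tau_1\vdash e_2:\mathsf{T}\tau_2$ infer $\Gamma;\Delta,\Delta'\vdash\mathtt{bind}\ x\Leftarrow e_1\ \mathtt{in}\ e_2:\mathsf{T}\tau_2$; from $\Gamma;\Delta\vdash e_i:\mathsf{T}\tau$ ($i=1,2$) infer $\Gamma;\Delta\vdash e_1\sqcap e_2:\mathsf{T}\tau$. One-step reduction $\rightsquigarrow$: least relation containing $(\lambda x.e)e'\rightsquigarrow e[e'/x]$; $\mathtt{fix}_\tau\,e\rightsquigarrow e(\mathtt{fix}_\tau\,e)$; $\mathtt{succ}\,n\rightsquigarrow n+1$; $\mathtt{pred}\,0\rightsquigarrow0$; $\mathtt{pred}\,n\rightsquigarrow n-1$ ($n\ge1$); $\mathtt{iszero}\,0\rightsquigarrow\mathtt{true}$; $\mathtt{iszero}\,n\rightsquigarrow\mathtt{false}$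 ($n\ge1$); $\mathtt{if}\ \mathtt{true}\ \mathtt{then}\ e_1\ \mathtt{else}\ e_2\rightsquigarrow e_1$; $\mathtt{if}\ \mathtt{false}\ \mathtt{then}\ e_1\ \mathtt{else}\ e_2\rightsquigarrow e_2$; $\mathtt{proj}_i\langle e_1,e_2\rangle\rightsquigarrow e_i$; $\mathtt{let}\ x\otimes y=e_1\otimes e_2\ \mathtt{in}\ e\rightsquigarrow e[e_1/x,e_2/y]$; $\mathtt{bind}\ x\Leftarrow\mathtt{val}(e')\ \mathtt{in}\ e\rightsquigarrow(\lambda x.e)e'$ when $e'\not\rightsquigarrow$; $e_1\sqcap e_2\rightsquigarrow e_i$ ($i=1,2$); closed under $\mathcal{E}[e_1]\rightsquigarrow\mathcal{E}[e_2]$ for evaluation contexts $\mathcal{E}::=[\,]\mid\mathtt{succ}(\mathcal{E})\mid\mathtt{pred}(\mathcal{E})\mid\mathtt{iszero}(\mathcal{E})\mid\mathcal{E}\,e\mid\mathtt{if}\ \mathcal{E}\ \mathtt{then}\ e_1\ \mathtt{else}\ e_2\mid\mathtt{proj}_i(\mathcal{E})\mid\mathtt{let}\ x\otimes y=\mathcal{E}\ \mathtt{in}\ e\mid\mathtt{bind}\ x\Leftarrow\mathcal{E}\ \mathtt{in}\ e\mid\mathtt{val}(\mathcal{E})$. *)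

(* Defs.v *)
(* Terms are represented with de Bruijn indices (= terms up to
   alpha-equivalence); substitution is the standard capture-avoiding
   parallel substitution on de Bruijn terms. *)
From Stdlib Require Import List Arith.
Import ListNotations.

Inductive ty : Type :=
  | TNat : ty
  | TBool : ty
  | TWith : ty -> ty -> ty
  | TTensor : ty -> ty -> ty
  | TLolli : ty -> ty -> ty
  | TArrow : ty -> ty -> ty
  | TMon : ty -> ty.

Inductive term : Type :=
  | Var : nat -> term
  | Num : nat -> term
  | Succ : term
  | Pred : term
  | IsZero : term
  | Lam : term -> term
  | App : term -> term -> term
  | Tt : term
  | Ff : term
  | If : term -> term -> term -> term
  | Pair : term -> term -> term
  | Proj1 : term -> term
  | Proj2 : term -> term
  | Fix : ty -> term
  | Tens : term -> term -> term
  | LetT : term -> term -> term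
      (* LetT e' e = let x (x) y = e' in e ;
         in e, index 1 is x and index 0 is y *)
  | Val : term -> term
  | Bind : term -> term -> term
      (* Bind e1 e2 = bind x <= e1 in e2 ; binds index 0 in e2 *)
  | Choice : term -> term -> term.

Definition scons {A : Type} (a : A) (f : nat -> A) (n : nat) : A :=
  match n with 0 => a | S m => f m end.

Definition upren (xi : nat -> nat) : nat -> nat := scons 0 (fun n => S (xi n)).

Fixpoint ren (xi : nat -> nat) (t : term) : term :=
  match t with
  | Var n => Var (xi n)
  | Num n => Num n
  | Succ => Succ
  | Pred => Pred
  | IsZero => IsZero
  | Lam e => Lam (ren (upren xi) e)
  | App a b => App (ren xi a) (ren xi b)
  | Tt => Tt
  | Ff => Ff
  | If a b c => If (ren xi a) (ren xi b) (ren xi c)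
  | Pair a b => Pair (ren xi a) (ren xi b)
  | Proj1 a => Proj1 (ren xi a)
  | Proj2 a => Proj2 (ren xi a)
  | Fix T => Fix T
  | Tens a b => Tens (ren xi a) (ren xi b)
  | LetT a e => LetT (ren xi a) (ren (upren (upren xi)) e)
  | Val a => Val (ren xi a)
  | Bind a e => Bind (ren xi a) (ren (upren xi) e)
  | Choice a b => Choice (ren xi a) (ren xi b)
  end.

Definition up (sigma : nat -> term) : nat -> term :=
  scons (Var 0) (fun n => ren S (sigma n)).

Fixpoint subst (sigma : nat -> term) (t : term) : term :=
  match t with
  | Var n => sigma n
  | Num n => Num n
  | Succ => Succ
  | Pred => Pred
  | IsZero => IsZero
  | Lam e => Lam (subst (up sigma) e)
  | App a b => App (subst sigma a) (subst sigma b)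
  | Tt => Tt
  | Ff => Ff
  | If a b c => If (subst sigma a) (subst sigma b) (subst sigma c)
  | Pair a b => Pair (subst sigma a) (subst sigma b)
  | Proj1 a => Proj1 (subst sigma a)
  | Proj2 a => Proj2 (subst sigma a)
  | Fix T => Fix T
  | Tens a b => Tens (subst sigma a) (subst sigma b)
  | LetT a e => LetT (subst sigma a) (subst (up (up sigma)) e)
  | Val a => Val (subst sigma a)
  | Bind a e => Bind (subst sigma a) (subst (up sigma) e)
  | Choice a b => Choice (subst sigma a) (subst sigma b)
  end.

Definition subst1 (e' e : term) : term := subst (scons e' Var) e.
(* e[e1/x, e2/y] for the body of LetT (x = index 1, y = index 0) *)
Definition subst2 (e1 e2 e : term) : term := subst (scons e2 (scons e1 Var)) e.

(* A de Bruijn environment records, for every index, whether it is a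
   non-linear variable (in Gamma), a linear variable (in Delta), or
   not available.  Gamma;Delta is thus a single list of slots. *)
Inductive slot : Type :=
  | SNon : ty -> slot
  | SLin : ty -> slot
  | SNone : slot.

Definition ctx := list slot.

Definition nolin (c : ctx) : Prop := forall x T, nth_error c x <> Some (SLin T).

Definition erase_slot (s : slot) : slot :=
  match s with SLin _ => SNone | s => s end.
Definition erase (c : ctx) : ctx := map erase_slot c.

(* Delta = Delta1, Delta2 (disjoint union), with the same Gamma *)
Inductive split_slot : slot -> slot -> slot -> Prop :=
  | split_non : forall T, split_slot (SNon T) (SNon T) (SNon T)
  | split_none : split_slot SNone SNone SNone
  | split_linl : forall T, split_slot (SLin T) (SLin T) SNone
  | split_linr : forall T, split_slot (SLin T) SNone (SLin T).

Inductive split : ctx -> ctx -> ctx -> Prop :=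
  | split_nil : split [] [] []
  | split_cons : forall s s1 s2 c c1 c2,
      split_slot s s1 s2 -> split c c1 c2 -> split (s :: c) (s1 :: c1) (s2 :: c2).

Inductive typed : ctx -> term -> ty -> Prop :=
  | T_VarN : forall c x T,
      nth_error c x = Some (SNon T) -> nolin c -> typed c (Var x) T
  | T_VarL : forall c x T,
      nth_error c x = Some (SLin T) ->
      (forall y U, y <> x -> nth_error c y <> Some (SLin U)) ->
      typed c (Var x) T
  | T_Fix : forall c T, nolin c -> typed c (Fix T) (TArrow (TArrow T T) T)
  | T_Num : forall c n, nolin c -> typed c (Num n) TNat
  | T_True : forall c, nolin c -> typed c Tt TBool
  | T_False : forall c, nolin c -> typed c Ff TBool
  | T_Succ : forall c, nolin c -> typed c Succ (TLolli TNat TNat)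
  | T_Pred : forall c, nolin c -> typed c Pred (TLolli TNat TNat)
  | T_IsZero : forall c, nolin c -> typed c IsZero (TLolli TNat TBool)
  | T_If : forall c c1 c2 e1 e2 e3 T,
      split c c1 c2 -> typed c1 e1 TBool -> typed c2 e2 T -> typed c2 e3 T ->
      typed c (If e1 e2 e3) T
  | T_Pair : forall c e1 e2 T1 T2,
      typed c e1 T1 -> typed c e2 T2 -> typed c (Pair e1 e2) (TWith T1 T2)
  | T_Proj1 : forall c e T1 T2, typed c e (TWith T1 T2) -> typed c (Proj1 e) T1
  | T_Proj2 : forall c e T1 T2, typed c e (TWith T1 T2) -> typed c (Proj2 e) T2
  | T_Tens : forall c c1 c2 e1 e2 T1 T2,
      split c c1 c2 -> typed c1 e1 T1 -> typed c2 e2 T2 ->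
      typed c (Tens e1 e2) (TTensor T1 T2)
  | T_Let : forall c c1 c2 e e' T1 T2 T,
      split c c1 c2 -> typed (SLin T2 :: SLin T1 :: c1) e T ->
      typed c2 e' (TTensor T1 T2) -> typed c (LetT e' e) T
  | T_LamN : forall c e T T',
      typed (SNon T :: c) e T' -> typed c (Lam e) (TArrow T T')
  | T_AppN : forall c e e' T T',
      typed c e (TArrow T' T) -> typed (erase c) e' T' -> typed c (App e e') T
  | T_LamL : forall c e T T',
      typed (SLin T :: c) e T' -> typed c (Lam e) (TLolli T T')
  | T_AppL : forall c c1 c2 e e' T T',
      split c c1 c2 -> typed c1 e (TLolli T' T) -> typed c2 e' T' ->
      typed c (App e e') T
  | T_Val : forall c e T, typed c e T -> typed c (Val e) (TMon T)
  | T_BindN : forall c e1 e2 T1 T2,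
      typed (erase c) e1 (TMon T1) -> typed (SNon T1 :: c) e2 (TMon T2) ->
      typed c (Bind e1 e2) (TMon T2)
  | T_BindL : forall c c1 c2 e1 e2 T1 T2,
      split c c1 c2 -> typed c1 e1 (TMon T1) -> typed (SLin T1 :: c2) e2 (TMon T2) ->
      typed c (Bind e1 e2) (TMon T2)
  | T_Choice : forall c e1 e2 T,
      typed c e1 (TMon T) -> typed c e2 (TMon T) -> typed c (Choice e1 e2) (TMon T).

(* the redex rules other than the bind rule (which has a negative side
   condition and is handled in [step] below) *)
Inductive head : term -> term -> Prop :=
  | H_beta : forall e e', head (App (Lam e) e') (subst1 e' e)
  | H_fix : forall T e, head (App (Fix T) e) (App e (App (Fix T) e))
  | H_succ : forall n, head (App Succ (Num n)) (Num (S n))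
  | H_pred0 : head (App Pred (Num 0)) (Num 0)
  | H_predS : forall n, head (App Pred (Num (S n))) (Num n)
  | H_iszero0 : head (App IsZero (Num 0)) Tt
  | H_iszeroS : forall n, head (App IsZero (Num (S n))) Ff
  | H_iftrue : forall e1 e2, head (If Tt e1 e2) e1
  | H_iffalse : forall e1 e2, head (If Ff e1 e2) e2
  | H_proj1 : forall e1 e2, head (Proj1 (Pair e1 e2)) e1
  | H_proj2 : forall e1 e2, head (Proj2 (Pair e1 e2)) e2
  | H_let : forall e1 e2 e, head (LetT (Tens e1 e2) e) (subst2 e1 e2 e)
  | H_choice1 : forall e1 e2, head (Choice e1 e2) e1
  | H_choice2 : forall e1 e2, head (Choice e1 e2) e2.

(* Because the bind rule has the negative premise
   "e' does not reduce" on a proper subterm, it is defined by structural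
   recursion on e (closure under E[.] = closure under each one-frame context). *)
Fixpoint step (t t' : term) {struct t} : Prop :=
  head t t' \/
  match t with
  | App a b =>
      (exists a', step a a' /\ t' = App a' b) \/
      ((a = Succ \/ a = Pred \/ a = IsZero) /\ exists b', step b b' /\ t' = App a b')
  | If a e1 e2 => exists a', step a a' /\ t' = If a' e1 e2
  | Proj1 a => exists a', step a a' /\ t' = Proj1 a'
  | Proj2 a => exists a', step a a' /\ t' = Proj2 a'
  | LetT a e => exists a', step a a' /\ t' = LetT a' e
  | Bind a e =>
      (exists a', step a a' /\ t' = Bind a' e) \/
      match a with
      | Val v => (~ exists v', step v v') /\ t' = App (Lam e) v
      | _ => False
      end
  | Val a => exists a', step a a' /\ t' = Val a'
  | _ => False
  end.

(* Main.v *)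
From Stdlib Require Import List Arith Lia.
Import ListNotations.
Require Import Defs.

Lemma upren_ext xi zeta : (forall n, xi n = zeta n) -> forall n, upren xi n = upren zeta n.
Proof. intros H [|n]; cbn; rewrite ?H; reflexivity. Qed.

Lemma ren_ext : forall t xi zeta, (forall n, xi n = zeta n) -> ren xi t = ren zeta t.
Proof.
  induction t; intros xi zeta H; simpl; f_equal; eauto using upren_ext;
  try (apply IHt2; apply upren_ext; apply upren_ext; auto).
Qed.

Lemma ren_ren : forall t xi zeta, ren xi (ren zeta t) = ren (fun n => xi (zeta n)) t.
Proof.
  induction t; intros xi zeta; simpl; f_equal; auto.
  - rewrite IHt. apply ren_ext. intros [|n]; reflexivity.
  - rewrite IHt2. apply ren_ext. intros [|[|n]]; reflexivity.
  - rewrite IHt2. apply ren_ext. intros [|n]; reflexivity.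
Qed.

Lemma up_ext s t : (forall n, s n = t n) -> forall n, up s n = up t n.
Proof. intros H [|n]; cbn; rewrite ?H; reflexivity. Qed.

Lemma subst_ext : forall t s r, (forall n, s n = r n) -> subst s t = subst r t.
Proof.
  induction t; intros s r H; simpl; f_equal; eauto using up_ext;
  try (apply IHt2; apply up_ext; apply up_ext; auto).
Qed.

Lemma subst_ren : forall t s xi, subst s (ren xi t) = subst (fun n => s (xi n)) t.
Proof.
  induction t; intros s xi; simpl; f_equal; auto.
  - rewrite IHt. apply subst_ext. intros [|n]; reflexivity.
  - rewrite IHt2. apply subst_ext. intros [|[|n]]; reflexivity.
  - rewrite IHt2. apply subst_ext. intros [|n]; reflexivity.
Qed.

Lemma up_ren_subst xi s n :
  ren (upren xi) (up s n) = up (fun n => ren xi (s n)) n.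
Proof.
  destruct n; simpl; auto. unfold up, scons. rewrite !ren_ren. reflexivity.
Qed.

Lemma ren_subst : forall t xi s, ren xi (subst s t) = subst (fun n => ren xi (s n)) t.
Proof.
  induction t; intros xi s; simpl; f_equal; auto.
  - rewrite IHt. apply subst_ext. intros n. apply up_ren_subst.
  - rewrite IHt2. apply subst_ext. intros n. rewrite up_ren_subst.
    apply up_ext. intro. apply up_ren_subst.
  - rewrite IHt2. apply subst_ext. intros n. apply up_ren_subst.
Qed.

Lemma up_subst_subst s r n :
  subst (up s) (up r n) = up (fun n => subst s (r n)) n.
Proof.
  destruct n; simpl; auto. rewrite subst_ren, ren_subst. reflexivity.
Qed.

Lemma subst_subst : forall t s r, subst s (subst r t) = subst (fun n => subst s (r n)) t.
Proof.
  induction t; intros s r; simpl; f_equal; auto.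
  - rewrite IHt. apply subst_ext. intros n. apply up_subst_subst.
  - rewrite IHt2. apply subst_ext. intros n. rewrite up_subst_subst.
    apply up_ext. intro. apply up_subst_subst.
  - rewrite IHt2. apply subst_ext. intros n. apply up_subst_subst.
Qed.

Lemma subst_id : forall t s, (forall n, s n = Var n) -> subst s t = t.
Proof.
  assert (HU : forall s, (forall n, s n = Var n) -> forall n, up s n = Var n).
  { intros s H [|n]; cbn; rewrite ?H; reflexivity. }
  induction t; intros s H; simpl; f_equal; auto.
Qed.

Lemma ren_id : forall t xi, (forall n, xi n = n) -> ren xi t = t.
Proof.
  assert (HU : forall xi, (forall n, xi n = n) -> forall n, upren xi n = n).
  { intros xi H [|n]; cbn; rewrite ?H; reflexivity. }
  induction t; intros xi H; simpl; f_equal; auto.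
Qed.

Lemma subst2_eq e1 e2 e :
  subst2 e1 e2 e = subst (scons e1 Var) (subst (scons (ren S e2) Var) e).
Proof.
  unfold subst2. rewrite subst_subst. apply subst_ext. intros [|n]; simpl; auto.
  rewrite subst_ren. symmetry. apply subst_id. intros; reflexivity.
Qed.

Definition lift (k y : nat) : nat := if y <? k then y else S y.
Definition upn (k : nat) (s : nat -> term) : nat -> term := Nat.iter k up s.

Lemma upren_lift k n : upren (lift k) n = lift (S k) n.
Proof.
  destruct n; unfold lift; simpl; auto.
  destruct (Nat.ltb_spec n k); destruct (Nat.ltb_spec (S n) (S k)); lia.
Qed.

Lemma lift_cover k z : z = k \/ exists y, z = lift k y.
Proof.
  destruct (lt_eq_lt_dec z k) as [[H|H]|H].
  - right. exists z. unfold lift. destruct (Nat.ltb_spec z k); lia.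
  - left; auto.
  - right. exists (pred z). unfold lift. destruct (Nat.ltb_spec (pred z) k); lia.
Qed.

Lemma lift_neq k y : lift k y <> k.
Proof. unfold lift. destruct (Nat.ltb_spec y k); lia. Qed.

Lemma lift_inj k y y' : lift k y = lift k y' -> y = y'.
Proof. unfold lift. destruct (Nat.ltb_spec y k); destruct (Nat.ltb_spec y' k); lia. Qed.

Lemma nth_lift {A} (pre c : list A) s y :
  nth_error (pre ++ s :: c) (lift (length pre) y) = nth_error (pre ++ c) y.
Proof.
  unfold lift. destruct (Nat.ltb_spec y (length pre)).
  - rewrite !nth_error_app1; auto.
  - rewrite !nth_error_app2 by lia.
    replace (S y - length pre) with (S (y - length pre)) by lia. reflexivity.
Qed.

Lemma nth_at {A} (pre c : list A) s : nth_error (pre ++ s :: c) (length pre) = Some s.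
Proof. rewrite nth_error_app2 by lia. rewrite Nat.sub_diag. reflexivity. Qed.

Lemma upn_lift : forall k v y, upn k (scons v Var) (lift k y) = Var y.
Proof.
  induction k; intros v y.
  - unfold lift. destruct (Nat.ltb_spec y 0); [lia|]. reflexivity.
  - destruct y.
    + reflexivity.
    + assert (E : lift (S k) (S y) = S (lift k y)).
      { unfold lift. destruct (Nat.ltb_spec y k); destruct (Nat.ltb_spec (S y) (S k)); lia. }
      rewrite E. change (ren S (upn k (scons v Var) (lift k y)) = Var (S y)).
      rewrite IHk. reflexivity.
Qed.

Lemma upn_at : forall k v, upn k (scons v Var) k = ren (Nat.add k) v.
Proof.
  induction k; intros v.
  - symmetry. apply ren_id. auto.
  - change (ren S (upn k (scons v Var) k) = ren (Nat.add (S k)) v).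
    rewrite IHk, ren_ren. apply ren_ext. intros; lia.
Qed.

Definition nonlin (s : slot) := forall T, s <> SLin T.

Lemma nonlin_split_slot s : nonlin s -> split_slot s s s.
Proof. intros H; destruct s; try constructor. exfalso; eapply H; eauto. Qed.

Lemma nonlin_erase s : nonlin s -> erase_slot s = s.
Proof. intros H; destruct s; auto. exfalso; eapply H; eauto. Qed.

Lemma nolin_insert pre d s : nolin (pre ++ d) -> nonlin s -> nolin (pre ++ s :: d).
Proof.
  intros H Hs z T. destruct (lift_cover (length pre) z) as [->|[y ->]].
  - rewrite nth_at. intro E; inversion E; subst. eapply Hs; eauto.
  - rewrite nth_lift. apply H.
Qed.

Lemma nolin_remove pre d s : nolin (pre ++ s :: d) -> nolin (pre ++ d).
Proof. intros H z T. rewrite <- (nth_lift pre d s). apply H. Qed.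

Lemma nolin_slot pre d s : nolin (pre ++ s :: d) -> nonlin s.
Proof. intros H T E. subst. apply (H (length pre) T). apply nth_at. Qed.

Lemma nolin_app_l a b : nolin (a ++ b) -> nolin a.
Proof.
  intros H x T E. apply (H x T). rewrite nth_error_app1; auto.
  apply nth_error_Some. congruence.
Qed.

Lemma nolin_cons s c : nolin (s :: c) -> nolin c.
Proof. intros H x T. apply (H (S x) T). Qed.

Lemma nolin_erase_id : forall c, nolin c -> erase c = c.
Proof.
  induction c; intros H; simpl; auto. f_equal.
  - apply nonlin_erase. intros T E; subst. apply (H 0 T); reflexivity.
  - apply IHc. eapply nolin_cons; eauto.
Qed.

Lemma nolin_erase c : nolin (erase c).
Proof.
  intros x T. unfold erase. rewrite nth_error_map.
  destruct (nth_error c x) as [[]|]; simpl; congruence.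
Qed.

Lemma erase_idem c : erase (erase c) = erase c.
Proof. apply nolin_erase_id, nolin_erase. Qed.

Lemma erase_app a b : erase (a ++ b) = erase a ++ erase b.
Proof. apply map_app. Qed.

Lemma erase_length a : length (erase a) = length a.
Proof. apply length_map. Qed.

Lemma split_length : forall a b c, split a b c -> length b = length a /\ length c = length a.
Proof. induction 1; simpl; intuition. Qed.

Lemma split_app : forall a a1 a2 b b1 b2, split a a1 a2 -> split b b1 b2 ->
  split (a ++ b) (a1 ++ b1) (a2 ++ b2).
Proof. induction 1; intros; simpl; auto. constructor; auto. Qed.

Lemma split_app_inv : forall pre d q1 q2, split (pre ++ d) q1 q2 ->
  exists pre1 pre2 d1 d2, q1 = pre1 ++ d1 /\ q2 = pre2 ++ d2 /\
    split pre pre1 pre2 /\ split d d1 d2.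
Proof.
  induction pre; intros d q1 q2 H; simpl in *.
  - exists [], [], q1, q2. repeat split; auto. constructor.
  - inversion H as [|? ? ? ? ? ? Hs Hr]; subst. destruct (IHpre _ _ _ Hr) as (p1 & p2 & d1 & d2 & -> & -> & S1 & S2).
    exists (s1 :: p1), (s2 :: p2), d1, d2. repeat split; auto. constructor; auto.
Qed.

Lemma split_cons_inv s c D1 D2 : split (s :: c) D1 D2 ->
  exists s1 s2 r1 r2, D1 = s1 :: r1 /\ D2 = s2 :: r2 /\ split_slot s s1 s2 /\ split c r1 r2.
Proof. intros H; inversion H; subst; do 4 eexists; eauto. Qed.

Lemma split_comm : forall c c1 c2, split c c1 c2 -> split c c2 c1.
Proof.
  induction 1; constructor; auto. inversion H; constructor.
Qed.

Lemma split_nolin_l : forall c c1 c2, split c c1 c2 -> nolin c1 -> c = c2.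
Proof.
  induction 1; intros N; auto. f_equal.
  - inversion H; subst; auto. exfalso. apply (N 0 T). reflexivity.
  - apply IHsplit. eapply nolin_cons; eauto.
Qed.

Lemma split_assoc : forall c c1 c2, split c c1 c2 -> forall r1 r2, split c1 r1 r2 ->
  exists c', split c c' r2 /\ split c' r1 c2.
Proof.
  induction 1; intros r1 r2 H1.
  - inversion H1; subst. exists []; split; constructor.
  - inversion H1 as [|? ? ? ? ? ? Hss Hsp]; subst. destruct (IHsplit _ _ Hsp) as (c' & A & B).
    inversion H; subst; inversion Hss; subst;
    first [ exists (SNone :: c'); split; constructor; auto; constructor
          | exists (SNon T :: c'); split; constructor; auto; constructor
          | exists (SLin T :: c'); split; constructor; auto; constructor ].
Qed.

Lemma split_erase : forall c c1 c2, split c c1 c2 -> erase c1 = erase c /\ erase c2 = erase c.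
Proof.
  induction 1; simpl; auto. destruct IHsplit as [A B]. rewrite A, B.
  inversion H; subst; auto.
Qed.

Lemma weaken_gen : forall c t U, typed c t U -> forall pre d s, c = pre ++ d -> nonlin s ->
  typed (pre ++ s :: d) (ren (lift (length pre)) t) U.
Proof.
  induction 1; intros pre d s0 E Hs; subst; simpl.
  - apply T_VarN. rewrite nth_lift; auto. apply nolin_insert; auto.
  - apply T_VarL. rewrite nth_lift; auto.
    intros y U Hy. destruct (lift_cover (length pre) y) as [->|[y' ->]].
    + rewrite nth_at. intro E; inversion E; subst. eapply Hs; eauto.
    + rewrite nth_lift. apply H0. intro; subst; auto.
  - apply T_Fix; apply nolin_insert; auto.
  - apply T_Num; apply nolin_insert; auto.
  - apply T_True; apply nolin_insert; auto.
  - apply T_False; apply nolin_insert; auto.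
  - apply T_Succ; apply nolin_insert; auto.
  - apply T_Pred; apply nolin_insert; auto.
  - apply T_IsZero; apply nolin_insert; auto.
  - destruct (split_app_inv _ _ _ _ H) as (p1 & p2 & d1 & d2 & -> & -> & S1 & S2).
    destruct (split_length _ _ _ S1) as [L1 L2].
    apply T_If with (p1 ++ s0 :: d1) (p2 ++ s0 :: d2).
    + apply split_app; auto. constructor; auto. apply nonlin_split_slot; auto.
    + rewrite <- L1. apply IHtyped1; auto.
    + rewrite <- L2. apply IHtyped2; auto.
    + rewrite <- L2. apply IHtyped3; auto.
  - constructor; auto.
  - econstructor; eauto.
  - econstructor; eauto.
  - destruct (split_app_inv _ _ _ _ H) as (p1 & p2 & d1 & d2 & -> & -> & S1 & S2).
    destruct (split_length _ _ _ S1) as [L1 L2].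
    apply T_Tens with (p1 ++ s0 :: d1) (p2 ++ s0 :: d2).
    + apply split_app; auto. constructor; auto. apply nonlin_split_slot; auto.
    + rewrite <- L1. apply IHtyped1; auto.
    + rewrite <- L2. apply IHtyped2; auto.
  - destruct (split_app_inv _ _ _ _ H) as (p1 & p2 & d1 & d2 & -> & -> & S1 & S2).
    destruct (split_length _ _ _ S1) as [L1 L2].
    apply T_Let with (p1 ++ s0 :: d1) (p2 ++ s0 :: d2) T1 T2.
    + apply split_app; auto. constructor; auto. apply nonlin_split_slot; auto.
    + specialize (IHtyped1 (SLin T2 :: SLin T1 :: p1) d1 s0 eq_refl Hs).
      simpl in IHtyped1. rewrite L1 in IHtyped1.
      erewrite ren_ext; [exact IHtyped1|]. intros n. rewrite upren_ext with (zeta := lift (S (length pre))) by apply upren_lift.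
      apply upren_lift.
    + rewrite <- L2. apply IHtyped2; auto.
  - constructor. specialize (IHtyped (SNon T :: pre) d s0 eq_refl Hs). simpl in IHtyped.
    erewrite ren_ext; [exact IHtyped|]. apply upren_lift.
  - apply T_AppN with T'; auto.
    rewrite erase_app. simpl. rewrite nonlin_erase by auto.
    rewrite <- (erase_length pre). apply IHtyped2; auto. apply erase_app.
  - constructor. specialize (IHtyped (SLin T :: pre) d s0 eq_refl Hs). simpl in IHtyped.
    erewrite ren_ext; [exact IHtyped|]. apply upren_lift.
  - destruct (split_app_inv _ _ _ _ H) as (p1 & p2 & d1 & d2 & -> & -> & S1 & S2).
    destruct (split_length _ _ _ S1) as [L1 L2].
    apply T_AppL with (p1 ++ s0 :: d1) (p2 ++ s0 :: d2) T'.
    + apply split_app; auto. constructor; auto. apply nonlin_split_slot; auto.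
    + rewrite <- L1. apply IHtyped1; auto.
    + rewrite <- L2. apply IHtyped2; auto.
  - constructor; auto.
  - apply T_BindN with T1.
    + rewrite erase_app. simpl. rewrite nonlin_erase by auto.
      rewrite <- (erase_length pre). apply IHtyped1; auto. apply erase_app.
    + specialize (IHtyped2 (SNon T1 :: pre) d s0 eq_refl Hs). simpl in IHtyped2.
      erewrite ren_ext; [exact IHtyped2|]. apply upren_lift.
  - destruct (split_app_inv _ _ _ _ H) as (p1 & p2 & d1 & d2 & -> & -> & S1 & S2).
    destruct (split_length _ _ _ S1) as [L1 L2].
    apply T_BindL with (p1 ++ s0 :: d1) (p2 ++ s0 :: d2) T1.
    + apply split_app; auto. constructor; auto. apply nonlin_split_slot; auto.
    + rewrite <- L1. apply IHtyped1; auto.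
    + specialize (IHtyped2 (SLin T1 :: p2) d2 s0 eq_refl Hs). simpl in IHtyped2.
      rewrite L2 in IHtyped2.
      erewrite ren_ext; [exact IHtyped2|]. apply upren_lift.
  - constructor; auto.
Qed.

Lemma weaken1 c t U s : typed c t U -> nonlin s -> typed (s :: c) (ren S t) U.
Proof.
  intros H Hs. pose proof (weaken_gen _ _ _ H [] c s eq_refl Hs) as W. simpl in W.
  erewrite ren_ext; [exact W|]. intros n. unfold lift. destruct (Nat.ltb_spec n 0); lia.
Qed.

Lemma weaken_pre : forall pre d v U, typed d v U -> nolin pre ->
  typed (pre ++ d) (ren (Nat.add (length pre)) v) U.
Proof.
  induction pre; intros d v U H N; simpl.
  - rewrite ren_id; auto.
  - assert (W : typed (a :: pre ++ d) (ren S (ren (Nat.add (length pre)) v)) U).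
    { apply weaken1. apply IHpre; auto. eapply nolin_cons; eauto.
      intros T E; subst. apply (N 0 T); reflexivity. }
    rewrite ren_ren in W. exact W.
Qed.

Definition Rsub (s : slot) (c1 c : ctx) (v : term) : Prop :=
  match s with
  | SNone => c = c1
  | SNon U => c = c1 /\ typed (erase c1) v U
  | SLin U => exists c2, split c c1 c2 /\ typed c2 v U
  end.

Lemma Rsub_nonlin s c1 c v : Rsub s c1 c v -> nonlin s -> c = c1.
Proof.
  destruct s; simpl; intros H N; try tauto. exfalso; eapply N; eauto.
Qed.

Lemma Rsub_split s c1 c v s1 s2 r1 r2 : Rsub s c1 c v -> split_slot s s1 s2 -> split c1 r1 r2 ->
  exists c' c'', Rsub s1 r1 c' v /\ Rsub s2 r2 c'' v /\ split c c' c''.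
Proof.
  intros R SS Sp. inversion SS; subst; simpl in R.
  - destruct R as [-> Hv]. exists r1, r2. simpl. destruct (split_erase _ _ _ Sp) as [A B].
    rewrite A, B. auto.
  - subst. exists r1, r2. simpl. auto.
  - destruct R as (c2 & Sc & Hv). destruct (split_assoc _ _ _ Sc _ _ Sp) as (c' & A & B).
    exists c', r2. simpl. split; eauto.
  - destruct R as (c2 & Sc & Hv).
    destruct (split_assoc _ _ _ Sc _ _ (split_comm _ _ _ Sp)) as (c' & A & B).
    exists r1, c'. simpl. split; auto. split; eauto. apply split_comm; auto.
Qed.

Lemma Rsub_erase s c1 c v : Rsub s c1 c v -> Rsub (erase_slot s) (erase c1) (erase c) v.
Proof.
  destruct s; simpl.
  - intros [-> H]. rewrite erase_idem. auto.
  - intros (c2 & Sp & _). symmetry. apply (split_erase _ _ _ Sp).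
  - intros ->; auto.
Qed.


Lemma subst_gen : forall c0 t T, typed c0 t T -> forall pre s c1 c v,
  c0 = pre ++ s :: c1 -> Rsub s c1 c v ->
  typed (pre ++ c) (subst (upn (length pre) (scons v Var)) t) T.
Proof.
  induction 1; intros pre s0 k1 kk v E R; subst; simpl.
  -
    pose proof (nolin_slot _ _ _ H0) as Ns.
    pose proof (Rsub_nonlin _ _ _ _ R Ns); subst.
    destruct (lift_cover (length pre) x) as [->|[y ->]].
    + rewrite nth_at in H. inversion H; subst. simpl in R. destruct R as [_ Hv].
      rewrite upn_at. apply weaken_pre.
      * rewrite nolin_erase_id in Hv; auto.
        apply nolin_remove in H0. intros z U. specialize (H0 (length pre + z) U).
        rewrite nth_error_app2 in H0 by lia. rewrite Nat.add_comm, Nat.add_sub in H0. auto.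
      * eapply nolin_app_l; eauto.
    + rewrite upn_lift. apply T_VarN. rewrite <- (nth_lift pre k1 s0); auto.
      eapply nolin_remove; eauto.
  -
    assert (Nrest : nolin (pre ++ k1) \/ True) by auto.
    destruct (lift_cover (length pre) x) as [->|[y ->]].
    + rewrite nth_at in H. inversion H; subst. simpl in R. destruct R as (c2 & Sp & Hv).
      assert (N : nolin (pre ++ k1)).
      { intros z U. rewrite <- (nth_lift pre k1 (SLin T)). apply H0. apply lift_neq. }
      assert (Nc1 : nolin k1).
      { intros z U. specialize (N (length pre + z) U).
        rewrite nth_error_app2 in N by lia. rewrite Nat.add_comm, Nat.add_sub in N. auto. }
      rewrite (split_nolin_l _ _ _ Sp Nc1).
      rewrite upn_at. apply weaken_pre; auto. eapply nolin_app_l; eauto.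
    + assert (Ns : nonlin s0).
      { intros U E; subst. apply (H0 (length pre) U). intro E. symmetry in E. eapply lift_neq; eauto.
        apply nth_at. }
      pose proof (Rsub_nonlin _ _ _ _ R Ns); subst.
      rewrite upn_lift. apply T_VarL. rewrite <- (nth_lift pre k1 s0); auto.
      intros y' U Hy. rewrite <- (nth_lift pre k1 s0). apply H0.
      intro E. apply Hy. eapply lift_inj; eauto.
  - pose proof (Rsub_nonlin _ _ _ _ R (nolin_slot _ _ _ H)); subst.
    constructor. eapply nolin_remove; eauto.
  - pose proof (Rsub_nonlin _ _ _ _ R (nolin_slot _ _ _ H)); subst.
    constructor. eapply nolin_remove; eauto.
  - pose proof (Rsub_nonlin _ _ _ _ R (nolin_slot _ _ _ H)); subst.
    constructor. eapply nolin_remove; eauto.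
  - pose proof (Rsub_nonlin _ _ _ _ R (nolin_slot _ _ _ H)); subst.
    constructor. eapply nolin_remove; eauto.
  - pose proof (Rsub_nonlin _ _ _ _ R (nolin_slot _ _ _ H)); subst.
    constructor. eapply nolin_remove; eauto.
  - pose proof (Rsub_nonlin _ _ _ _ R (nolin_slot _ _ _ H)); subst.
    constructor. eapply nolin_remove; eauto.
  - pose proof (Rsub_nonlin _ _ _ _ R (nolin_slot _ _ _ H)); subst.
    constructor. eapply nolin_remove; eauto.
  -
    destruct (split_app_inv _ _ _ _ H) as (p1 & p2 & d1 & d2 & -> & -> & S1 & S2).
    destruct (split_length _ _ _ S1) as [L1 L2].
    destruct (split_cons_inv _ _ _ _ S2) as (s1 & s2 & r1 & r2 & -> & -> & HS4 & HS6).
    destruct (Rsub_split _ _ _ _ _ _ _ _ R HS4 HS6) as (c' & c'' & R1 & R2 & Sp).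
    apply T_If with (p1 ++ c') (p2 ++ c'').
    + apply split_app; auto.
    + rewrite <- L1. eapply IHtyped1; eauto.
    + rewrite <- L2. eapply IHtyped2; eauto.
    + rewrite <- L2. eapply IHtyped3; eauto.
  - constructor; eauto.
  - econstructor; eauto.
  - econstructor; eauto.
  -
    destruct (split_app_inv _ _ _ _ H) as (p1 & p2 & d1 & d2 & -> & -> & S1 & S2).
    destruct (split_length _ _ _ S1) as [L1 L2].
    destruct (split_cons_inv _ _ _ _ S2) as (s1 & s2 & r1 & r2 & -> & -> & HS4 & HS6).
    destruct (Rsub_split _ _ _ _ _ _ _ _ R HS4 HS6) as (c' & c'' & R1 & R2 & Sp).
    apply T_Tens with (p1 ++ c') (p2 ++ c'').
    + apply split_app; auto.
    + rewrite <- L1. eapply IHtyped1; eauto.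
    + rewrite <- L2. eapply IHtyped2; eauto.
  -
    destruct (split_app_inv _ _ _ _ H) as (p1 & p2 & d1 & d2 & -> & -> & S1 & S2).
    destruct (split_length _ _ _ S1) as [L1 L2].
    destruct (split_cons_inv _ _ _ _ S2) as (s1 & s2 & r1 & r2 & -> & -> & HS4 & HS6).
    destruct (Rsub_split _ _ _ _ _ _ _ _ R HS4 HS6) as (c' & c'' & R1 & R2 & Sp).
    apply T_Let with (p1 ++ c') (p2 ++ c'') T1 T2.
    + apply split_app; auto.
    + specialize (IHtyped1 (SLin T2 :: SLin T1 :: p1) s1 r1 c' v eq_refl R1).
      simpl in IHtyped1. rewrite L1 in IHtyped1. exact IHtyped1.
    + rewrite <- L2. eapply IHtyped2; eauto.
  - constructor. exact (IHtyped (SNon T :: pre) s0 k1 kk v eq_refl R).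
  - apply T_AppN with T'; eauto.
    rewrite erase_app. rewrite <- (erase_length pre).
    apply IHtyped2 with (erase_slot s0) (erase k1).
    + rewrite erase_app. reflexivity.
    + apply Rsub_erase; auto.
  - constructor. exact (IHtyped (SLin T :: pre) s0 k1 kk v eq_refl R).
  -
    destruct (split_app_inv _ _ _ _ H) as (p1 & p2 & d1 & d2 & -> & -> & S1 & S2).
    destruct (split_length _ _ _ S1) as [L1 L2].
    destruct (split_cons_inv _ _ _ _ S2) as (s1 & s2 & r1 & r2 & -> & -> & HS4 & HS6).
    destruct (Rsub_split _ _ _ _ _ _ _ _ R HS4 HS6) as (c' & c'' & R1 & R2 & Sp).
    apply T_AppL with (p1 ++ c') (p2 ++ c'') T'.
    + apply split_app; auto.
    + rewrite <- L1. eapply IHtyped1; eauto.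
    + rewrite <- L2. eapply IHtyped2; eauto.
  - constructor; eauto.
  - apply T_BindN with T1.
    + rewrite erase_app. rewrite <- (erase_length pre).
      apply IHtyped1 with (erase_slot s0) (erase k1).
      * rewrite erase_app. reflexivity.
      * apply Rsub_erase; auto.
    + exact (IHtyped2 (SNon T1 :: pre) s0 k1 kk v eq_refl R).
  -
    destruct (split_app_inv _ _ _ _ H) as (p1 & p2 & d1 & d2 & -> & -> & S1 & S2).
    destruct (split_length _ _ _ S1) as [L1 L2].
    destruct (split_cons_inv _ _ _ _ S2) as (s1 & s2 & r1 & r2 & -> & -> & HS4 & HS6).
    destruct (Rsub_split _ _ _ _ _ _ _ _ R HS4 HS6) as (c' & c'' & R1 & R2 & Sp).
    apply T_BindL with (p1 ++ c') (p2 ++ c'') T1.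
    + apply split_app; auto.
    + rewrite <- L1. eapply IHtyped1; eauto.
    + specialize (IHtyped2 (SLin T1 :: p2) s2 r2 c'' v eq_refl R2).
      simpl in IHtyped2. rewrite L2 in IHtyped2. exact IHtyped2.
  - constructor; eauto.
Qed.

Lemma subst0 c1 s c v t T : typed (s :: c1) t T -> Rsub s c1 c v ->
  typed c (subst (scons v Var) t) T.
Proof. intros H R. exact (subst_gen _ _ _ H [] s c1 c v eq_refl R). Qed.

Lemma let_case c c1 c2 d1 d2 e e1 e2 T T1 T2 :
  split c c1 c2 -> typed (SLin T2 :: SLin T1 :: c1) e T -> split c2 d1 d2 ->
  typed d1 e1 T1 -> typed d2 e2 T2 ->
  typed c (subst (scons e1 Var) (subst (scons (ren S e2) Var) e)) T.
Proof.
  intros H2 He H3 H1 H4.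
  destruct (split_assoc _ _ _ (split_comm _ _ _ H2) _ _ (split_comm _ _ _ H3)) as (c' & A & B).
  eapply subst0 with (s := SLin T1) (c1 := c'); [| simpl; eauto].
  eapply subst0 with (s := SLin T2) (c1 := SLin T1 :: c1); eauto.
  simpl. exists (SNone :: d2). split.
  + constructor. constructor. apply split_comm; auto.
  + apply weaken1; auto. intros U E; discriminate.
Qed.

Lemma head_preserve c t t' T : typed c t T -> head t t' -> typed c t' T.
Proof.
  intros Ht Hh. inversion Hh; subst.
  all: try solve [inversion Ht; subst;
      repeat match goal with
      | Hx : typed _ Succ _ |- _ => inversion Hx; subst; clear Hx
      | Hx : typed _ Pred _ |- _ => inversion Hx; subst; clear Hx
      | Hx : typed _ IsZero _ |- _ => inversion Hx; subst; clear Hx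
      | Hx : typed _ Tt _ |- _ => inversion Hx; subst; clear Hx
      | Hx : typed _ Ff _ |- _ => inversion Hx; subst; clear Hx
      | Hx : typed _ (Num _) _ |- _ => inversion Hx; subst; clear Hx
      end;
      match goal with Hs : split ?c ?c1 ?c2, N : nolin ?c1 |- _ => rewrite (split_nolin_l _ _ _ Hs N) end;
      first [assumption | constructor; assumption]].
  -
    inversion Ht; subst.
    + inversion H2; subst. eapply subst0; eauto. simpl. auto.
    + inversion H3; subst. eapply subst0; eauto. simpl. eauto.
  -
    inversion Ht; subst.
    + inversion H2; subst. eapply T_AppN.
      * rewrite <- (nolin_erase_id c); eauto.
      * eapply T_AppN.
        -- constructor. apply nolin_erase.
        -- rewrite erase_idem; auto.
    + inversion H3.
  - inversion Ht; subst. match goal with Hx : typed _ (Pair _ _) _ |- _ => inversion Hx; subst; auto end.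
  - inversion Ht; subst. match goal with Hx : typed _ (Pair _ _) _ |- _ => inversion Hx; subst; auto end.
  -
    inversion Ht; subst. rewrite subst2_eq.
    match goal with Hx : typed _ (Tens _ _) _ |- _ => inversion Hx; subst end.
    eapply let_case; eauto.
  - inversion Ht; subst; auto.
  - inversion Ht; subst; auto.
Qed.

Theorem proposition5 :
  forall (c : ctx) (e e' : term) (T : ty),
    typed c e T -> step e e' -> typed c e' T.
Proof.
  intros c e; revert c. induction e; intros c e' T Ht Hs; simpl in Hs;
    destruct Hs as [Hh | Hs]; try (eapply head_preserve; eauto; fail); try contradiction.
  -
    destruct Hs as [[a' [Ha ->]] | [_ [b' [Hb ->]]]]; inversion Ht; subst.
    + eapply T_AppN; eauto.
    + eapply T_AppL; eauto.
    + eapply T_AppN; eauto.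
    + eapply T_AppL; eauto.
  - destruct Hs as [a' [Ha ->]]; inversion Ht; subst. eapply T_If; eauto.
  - destruct Hs as [a' [Ha ->]]; inversion Ht; subst. eapply T_Proj1; eauto.
  - destruct Hs as [a' [Ha ->]]; inversion Ht; subst. eapply T_Proj2; eauto.
  - destruct Hs as [a' [Ha ->]]; inversion Ht; subst. eapply T_Let; eauto.
  - destruct Hs as [a' [Ha ->]]; inversion Ht; subst. eapply T_Val; eauto.
  - destruct Hs as [[a' [Ha ->]] | H2].
    + inversion Ht; subst.
      * eapply T_BindN; eauto.
      * eapply T_BindL; eauto.
    + destruct e1; try contradiction. destruct H2 as [_ ->].
      inversion Ht; subst.
      * inversion H2; subst. eapply T_AppN; eauto. constructor; auto.
      * inversion H3; subst. eapply T_AppL; [apply split_comm; eauto | | eauto].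
        constructor; auto.
Qed.
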